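(* Let $k$ be a field, $X$ a set, and $S\subseteq GDNP(X)$. Let $\varphi:GDNP(X)\to C(X)$ be the GDN-Poisson algebra homomorphism induced by $a\mapsto a$ ($a\in X$), where $C(X)$ is regarded as a GDN-Poisson algebra via $x\circ y=x\ast Dy$. Then the GDN-Poisson algebra $GDNP(X|S)=GDNP(X)/Id(S)$ embeds into $C(X|\varphi(S))$: the GDN-Poisson algebra homomorphism $GDNP(X|S)\to C(X|\varphi(S))$ induced by $a\mapsto a$ is injective.
   Context: A GDN-Poisson algebra is a vector space $\mathcal A$ with bilinear products $\cdot,\circ$ such that $(\mathcal A,\cdot)$ is commutative associative with unit $e$, $(\mathcal A,\circ)$ satisfies $x\circ(y\circ z)-(x\circ y)\circ z=y\circ(x\circ z)-(y\circ x)\circ z$ and $(x\circ y)\circ z=(x\circ z)\circ y$, and $(x\cdot y)\circ z=x\cdot(y\circ z)$, $(x\circ y)\cdot z-x\circ(y\cdot z)=(y\circ x)\cdot z-y\circ(x\cdot z)$. $GDNP(X)$ is the free GDN-Poisson algebra on $X$, and $Id(S)$ its ideal generated by $S$. A special GDN-Poisson admissible algebra $(\mathcal A,\cdot,\ast,D)$ is a vector space with bilinear products $\cdot,\ast$ and a linear map $D$ such that $(\mathcal A,\cdot)$ is commutative associative with unit $e$, $(\mathcal A,\ast)$ is commutative associative, and $(x\cdot y)\ast z=x\cdot(y\ast z)$, $D(x\ast y)=(Dx)\ast y+x\ast(Dy)$, $D(x\cdot y)=(Dx)\cdot y+x\cdot(Dy)-x\cdot y\cdot(De)$. $C(X)$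 denotes the free such algebra generated by $X$; for $R\subseteq C(X)$, $C(X|R)=C(X)/Id[R]$ where $Id[R]$ is the ideal of $C(X)$ (closed under $\cdot,\ast,D$) generated by $R$. With $x\circ y:=x\ast Dy$, any such algebra is a GDN-Poisson algebra. *)

(* Defs.v *)
From mathcomp Require Import all_boot all_algebra.
Set Implicit Arguments. Unset Strict Implicit. Unset Printing Implicit Defensive.
Import GRing.Theory.
Local Open Scope ring_scope.

Section GDN.
Variables (k : fieldType) (X : Type).

Inductive gterm : Type :=
| gvar of X
| gunit
| gzero
| gadd of gterm & gterm
| gscale of k & gterm
| gdot of gterm & gterm
| gcirc of gterm & gterm.

Definition gsub (t u : gterm) := gadd t (gscale (-1) u).

(* congruence on gterm generated by the GDN-Poisson identities and by s ~ 0
   for s in S; the class of 0 is the ideal Id(S) of GDNP(X), and the quotient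
   is GDNP(X|S) = GDNP(X)/Id(S). *)
Inductive gdn_cong (S : gterm -> Prop) : gterm -> gterm -> Prop :=
| geq_refl t : gdn_cong S t t
| geq_sym t u : gdn_cong S t u -> gdn_cong S u t
| geq_trans t u v : gdn_cong S t u -> gdn_cong S u v -> gdn_cong S t v
| geq_add t t' u u' : gdn_cong S t t' -> gdn_cong S u u' -> gdn_cong S (gadd t u) (gadd t' u')
| geq_scale c t t' : gdn_cong S t t' -> gdn_cong S (gscale c t) (gscale c t')
| geq_dot t t' u u' : gdn_cong S t t' -> gdn_cong S u u' -> gdn_cong S (gdot t u) (gdot t' u')
| geq_circ t t' u u' : gdn_cong S t t' -> gdn_cong S u u' -> gdn_cong S (gcirc t u) (gcirc t' u')
| geq_addA t u v : gdn_cong S (gadd (gadd t u) v) (gadd t (gadd u v))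
| geq_addC t u : gdn_cong S (gadd t u) (gadd u t)
| geq_add0 t : gdn_cong S (gadd t gzero) t
| geq_scale1 t : gdn_cong S (gscale 1 t) t
| geq_scale0 t : gdn_cong S (gscale 0 t) gzero
| geq_scaleA a b t : gdn_cong S (gscale (a * b) t) (gscale a (gscale b t))
| geq_scaleDl a b t : gdn_cong S (gscale (a + b) t) (gadd (gscale a t) (gscale b t))
| geq_scaleDr a t u : gdn_cong S (gscale a (gadd t u)) (gadd (gscale a t) (gscale a u))
| geq_dotDl t u v : gdn_cong S (gdot (gadd t u) v) (gadd (gdot t v) (gdot u v))
| geq_dotDr t u v : gdn_cong S (gdot t (gadd u v)) (gadd (gdot t u) (gdot t v))
| geq_dotZl a t u : gdn_cong S (gdot (gscale a t) u) (gscale a (gdot t u))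
| geq_dotZr a t u : gdn_cong S (gdot t (gscale a u)) (gscale a (gdot t u))
| geq_circDl t u v : gdn_cong S (gcirc (gadd t u) v) (gadd (gcirc t v) (gcirc u v))
| geq_circDr t u v : gdn_cong S (gcirc t (gadd u v)) (gadd (gcirc t u) (gcirc t v))
| geq_circZl a t u : gdn_cong S (gcirc (gscale a t) u) (gscale a (gcirc t u))
| geq_circZr a t u : gdn_cong S (gcirc t (gscale a u)) (gscale a (gcirc t u))
| geq_dotC t u : gdn_cong S (gdot t u) (gdot u t)
| geq_dotA t u v : gdn_cong S (gdot (gdot t u) v) (gdot t (gdot u v))
| geq_dot1 t : gdn_cong S (gdot gunit t) t
| geq_lsym x y z :
    gdn_cong S (gsub (gcirc x (gcirc y z)) (gcirc (gcirc x y) z))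
          (gsub (gcirc y (gcirc x z)) (gcirc (gcirc y x) z))
| geq_rcom x y z : gdn_cong S (gcirc (gcirc x y) z) (gcirc (gcirc x z) y)
| geq_comp1 x y z : gdn_cong S (gcirc (gdot x y) z) (gdot x (gcirc y z))
| geq_comp2 x y z :
    gdn_cong S (gsub (gdot (gcirc x y) z) (gcirc x (gdot y z)))
          (gsub (gdot (gcirc y x) z) (gcirc y (gdot x z)))
| geq_rel s : S s -> gdn_cong S s gzero.

Inductive cterm : Type :=
| cvar of X
| cunit
| czero
| cadd of cterm & cterm
| cscale of k & cterm
| cdot of cterm & cterm
| cstar of cterm & cterm
| cD of cterm.

Definition csub (t u : cterm) := cadd t (cscale (-1) u).

(* congruence on cterm (compatible with ., *, D and linear structure) generated
   by the identities of special GDN-Poisson admissible algebras and r ~ 0 for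
   r in R; the class of 0 is Id[R], the quotient is C(X|R). *)
Inductive spc_cong (R : cterm -> Prop) : cterm -> cterm -> Prop :=
| ceq_refl t : spc_cong R t t
| ceq_sym t u : spc_cong R t u -> spc_cong R u t
| ceq_trans t u v : spc_cong R t u -> spc_cong R u v -> spc_cong R t v
| ceq_add t t' u u' : spc_cong R t t' -> spc_cong R u u' -> spc_cong R (cadd t u) (cadd t' u')
| ceq_scale c t t' : spc_cong R t t' -> spc_cong R (cscale c t) (cscale c t')
| ceq_dot t t' u u' : spc_cong R t t' -> spc_cong R u u' -> spc_cong R (cdot t u) (cdot t' u')
| ceq_star t t' u u' : spc_cong R t t' -> spc_cong R u u' -> spc_cong R (cstar t u) (cstar t' u')
| ceq_D t t' : spc_cong R t t' -> spc_cong R (cD t) (cD t')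
| ceq_addA t u v : spc_cong R (cadd (cadd t u) v) (cadd t (cadd u v))
| ceq_addC t u : spc_cong R (cadd t u) (cadd u t)
| ceq_add0 t : spc_cong R (cadd t czero) t
| ceq_scale1 t : spc_cong R (cscale 1 t) t
| ceq_scale0 t : spc_cong R (cscale 0 t) czero
| ceq_scaleA a b t : spc_cong R (cscale (a * b) t) (cscale a (cscale b t))
| ceq_scaleDl a b t : spc_cong R (cscale (a + b) t) (cadd (cscale a t) (cscale b t))
| ceq_scaleDr a t u : spc_cong R (cscale a (cadd t u)) (cadd (cscale a t) (cscale a u))
| ceq_dotDl t u v : spc_cong R (cdot (cadd t u) v) (cadd (cdot t v) (cdot u v))
| ceq_dotDr t u v : spc_cong R (cdot t (cadd u v)) (cadd (cdot t u) (cdot t v))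
| ceq_dotZl a t u : spc_cong R (cdot (cscale a t) u) (cscale a (cdot t u))
| ceq_dotZr a t u : spc_cong R (cdot t (cscale a u)) (cscale a (cdot t u))
| ceq_starDl t u v : spc_cong R (cstar (cadd t u) v) (cadd (cstar t v) (cstar u v))
| ceq_starDr t u v : spc_cong R (cstar t (cadd u v)) (cadd (cstar t u) (cstar t v))
| ceq_starZl a t u : spc_cong R (cstar (cscale a t) u) (cscale a (cstar t u))
| ceq_starZr a t u : spc_cong R (cstar t (cscale a u)) (cscale a (cstar t u))
| ceq_DD t u : spc_cong R (cD (cadd t u)) (cadd (cD t) (cD u))
| ceq_DZ a t : spc_cong R (cD (cscale a t)) (cscale a (cD t))
| ceq_dotC t u : spc_cong R (cdot t u) (cdot u t)
| ceq_dotA t u v : spc_cong R (cdot (cdot t u) v) (cdot t (cdot u v))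
| ceq_dot1 t : spc_cong R (cdot cunit t) t
| ceq_starC t u : spc_cong R (cstar t u) (cstar u t)
| ceq_starA t u v : spc_cong R (cstar (cstar t u) v) (cstar t (cstar u v))
| ceq_comp x y z : spc_cong R (cstar (cdot x y) z) (cdot x (cstar y z))
| ceq_Dstar x y : spc_cong R (cD (cstar x y)) (cadd (cstar (cD x) y) (cstar x (cD y)))
| ceq_Ddot x y :
    spc_cong R (cD (cdot x y))
          (csub (cadd (cdot (cD x) y) (cdot x (cD y))) (cdot (cdot x y) (cD cunit)))
| ceq_rel r : R r -> spc_cong R r czero.


Fixpoint phiGC (t : gterm) : cterm :=
  match t with
  | gvar a => cvar a
  | gunit => cunit
  | gzero => czero
  | gadd t u => cadd (phiGC t) (phiGC u)
  | gscale c t => cscale c (phiGC t)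
  | gdot t u => cdot (phiGC t) (phiGC u)
  | gcirc t u => cstar (phiGC t) (cD (phiGC u))
  end.

Definition phi_img (S : gterm -> Prop) : cterm -> Prop :=
  fun c => exists2 s, S s & c = phiGC s.

End GDN.

(* Main.v *)
Require Import Defs.
From HB Require Import structures.
From mathcomp Require Import all_boot all_algebra.
From mathcomp Require Import boolp.
From mathcomp Require Import ring.
Set Implicit Arguments. Unset Strict Implicit. Unset Printing Implicit Defensive.
Import GRing.Theory.
Local Open Scope ring_scope.

Section Q.
Variables (k : fieldType) (X : Type) (S : gterm k X -> Prop).
Notation gc := (gdn_cong S).

Definition QA := { P : gterm k X -> Prop | exists t, P = gc t }.
Definition cl (t : gterm k X) : QA := exist _ (gc t) (ex_intro _ t erefl).

Lemma cl_eq t u : gc t u -> cl t = cl u.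
Proof.
move=> h; rewrite /cl; apply: eq_exist_uncurried.
have e : gc t = gc u.
  apply: funext => v; apply: propext; split => hv.
    exact: geq_trans (geq_sym h) hv.
  exact: geq_trans h hv.
exists e; exact: Prop_irrelevance.
Qed.

Lemma cl_inj t u : cl t = cl u -> gc t u.
Proof.
move=> /(congr1 sval) /= e.
have : gc u u by exact: geq_refl.
by rewrite -e.
Qed.

Lemma quot_ind (P : QA -> Prop) : (forall t, P (cl t)) -> forall a, P a.
Proof.
move=> h [p pP]; have [t e] := cid pP; subst p.
suff -> : exist _ (gc t) pP = cl t by [].
by apply: eq_exist_uncurried; exists erefl; exact: Prop_irrelevance.
Qed.
Definition rep (a : QA) : gterm k X := proj1_sig (cid (proj2_sig a)).
Lemma clK a : cl (rep a) = a.
Proof.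
case: a => p pP; rewrite /rep /=; case: (cid pP) => t e /=; subst p.
by apply: eq_exist_uncurried; exists erefl; exact: Prop_irrelevance.
Qed.
Lemma repP t : gc (rep (cl t)) t.
Proof. apply: cl_inj; exact: clK. Qed.

Definition qadd := locked (fun a b => cl (gadd (rep a) (rep b))).
Definition qzero := cl (gzero _ _).
Definition qscale := locked (fun c a => cl (gscale c (rep a))).
Definition qopp a := qscale (-1) a.
Definition qmul := locked (fun a b => cl (gdot (rep a) (rep b))).
Definition qone := cl (gunit _ _).
Definition qcirc := locked (fun a b => cl (gcirc (rep a) (rep b))).

Lemma qaddE t u : qadd (cl t) (cl u) = cl (gadd t u).
Proof. rewrite /qadd /qscale /qmul /qcirc -!lock; apply: cl_eq; apply: geq_add; exact: repP. Qed.
Lemma qscaleE c t : qscale c (cl t) = cl (gscale c t).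
Proof. rewrite /qadd /qscale /qmul /qcirc -!lock; apply: cl_eq; apply: geq_scale; exact: repP. Qed.
Lemma qmulE t u : qmul (cl t) (cl u) = cl (gdot t u).
Proof. rewrite /qadd /qscale /qmul /qcirc -!lock; apply: cl_eq; apply: geq_dot; exact: repP. Qed.
Lemma qcircE t u : qcirc (cl t) (cl u) = cl (gcirc t u).
Proof. rewrite /qadd /qscale /qmul /qcirc -!lock; apply: cl_eq; apply: geq_circ; exact: repP. Qed.

Ltac qs c := apply: cl_eq; first [exact: c | apply: geq_sym; exact: c].
HB.instance Definition _ := gen_eqMixin QA.
HB.instance Definition _ := gen_choiceMixin QA.

Lemma qaddA : associative qadd.
Proof.
elim/quot_ind => t; elim/quot_ind => u; elim/quot_ind => v.
rewrite !qaddE; apply: cl_eq; exact: geq_sym (geq_addA _ _ _ _).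
Qed.
Lemma qaddC : commutative qadd.
Proof. elim/quot_ind => t; elim/quot_ind => u; rewrite !qaddE; apply: cl_eq; first [exact: geq_addC | exact: geq_sym (geq_addC _ _ _ _) | apply: geq_sym; exact: geq_addC]. Qed.
Lemma qadd0r : left_id qzero qadd.
Proof. elim/quot_ind => t; rewrite /qzero qaddE; apply: cl_eq; exact: geq_trans (geq_addC _ _ _) (geq_add0 _ _). Qed.
Lemma qaddNr : left_inverse qzero qopp qadd.
Proof.
elim/quot_ind => t; rewrite /qopp qscaleE qaddE; apply: cl_eq.
apply: geq_trans (geq_add (geq_refl _ _) (geq_sym (geq_scale1 _ t))) _.
apply: geq_trans (geq_sym (geq_scaleDl _ _ _ _)) _.
rewrite addNr; exact: geq_scale0.
Qed.
HB.instance Definition _ := GRing.isZmodule.Build QA qaddA qaddC qadd0r qaddNr.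

Lemma qmulA : associative qmul.
Proof. elim/quot_ind => t; elim/quot_ind => u; elim/quot_ind => v; rewrite !qmulE; apply: cl_eq; first [exact: geq_dotA | exact: geq_sym (geq_dotA _ _ _ _) | apply: geq_sym; exact: geq_dotA]. Qed.
Lemma qmulC : commutative qmul.
Proof. elim/quot_ind => t; elim/quot_ind => u; rewrite !qmulE; apply: cl_eq; first [exact: geq_dotC | exact: geq_sym (geq_dotC _ _ _ _) | apply: geq_sym; exact: geq_dotC]. Qed.
Lemma qmul1r : left_id qone qmul.
Proof. elim/quot_ind => t; rewrite qmulE; apply: cl_eq; first [exact: geq_dot1 | exact: geq_sym (geq_dot1 _ _ _ _) | apply: geq_sym; exact: geq_dot1]. Qed.
Lemma qmulDl : left_distributive qmul qadd.
Proof. elim/quot_ind => t; elim/quot_ind => u; elim/quot_ind => v; rewrite !qaddE !qmulE qaddE; apply: cl_eq; first [exact: geq_dotDl | exact: geq_sym (geq_dotDl _ _ _ _) | apply: geq_sym; exact: geq_dotDl]. Qed.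
HB.instance Definition _ := GRing.Zmodule_isComPzRing.Build QA qmulA qmulC qmul1r qmulDl.

Lemma qscaleA a b v : qscale a (qscale b v) = qscale (a * b) v.
Proof. elim/quot_ind: v => t; rewrite !qscaleE; apply: cl_eq; exact: geq_sym (geq_scaleA _ _ _ _). Qed.
Lemma qscale1 : left_id 1 qscale.
Proof. elim/quot_ind => t; rewrite !qscaleE; apply: cl_eq; first [exact: geq_scale1 | exact: geq_sym (geq_scale1 _ _ _ _) | apply: geq_sym; exact: geq_scale1]. Qed.
Lemma qscaleDr : right_distributive qscale qadd.
Proof. move=> c; elim/quot_ind => t; elim/quot_ind => u; rewrite !qaddE !qscaleE qaddE; apply: cl_eq; first [exact: geq_scaleDr | exact: geq_sym (geq_scaleDr _ _ _ _) | apply: geq_sym; exact: geq_scaleDr]. Qed.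
Lemma qscaleDl v : {morph qscale^~ v: a b / a + b >-> qadd a b}.
Proof. elim/quot_ind: v => t a b; rewrite !qscaleE qaddE; apply: cl_eq; first [exact: geq_scaleDl | exact: geq_sym (geq_scaleDl _ _ _ _) | apply: geq_sym; exact: geq_scaleDl]. Qed.
HB.instance Definition _ := GRing.Zmodule_isLmodule.Build k QA qscaleA qscale1 qscaleDr qscaleDl.

Lemma qscaleZl c (x y : QA) : (c *: x) * y = c *: (x * y).
Proof.
elim/quot_ind: x => t; elim/quot_ind: y => u.
change (qmul (qscale c (cl t)) (cl u) = qscale c (qmul (cl t) (cl u))).
rewrite !qscaleE !qmulE qscaleE; qs (geq_dotZl S c t u).
Qed.
Lemma qscaleZr c (x y : QA) : x * (c *: y) = c *: (x * y).
Proof. by rewrite mulrC qscaleZl mulrC. Qed.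

Lemma qcircDr x y z : qcirc x (y + z) = qcirc x y + qcirc x z.
Proof.
elim/quot_ind: x => t; elim/quot_ind: y => u; elim/quot_ind: z => v.
change (qcirc (cl t) (qadd (cl u) (cl v)) = qadd (qcirc (cl t) (cl u)) (qcirc (cl t) (cl v))).
rewrite qaddE !qcircE qaddE; qs (geq_circDr S t u v).
Qed.
Lemma qcircZr (x : QA) c y : qcirc x (c *: y) = c *: qcirc x y.
Proof.
elim/quot_ind: x => t; elim/quot_ind: y => u.
change (qcirc (cl t) (qscale c (cl u)) = qscale c (qcirc (cl t) (cl u))).
rewrite qscaleE !qcircE qscaleE; qs (geq_circZr S c t u).
Qed.
Lemma qcomp1 (x y z : QA) : qcirc (x * y) z = x * qcirc y z.
Proof.
elim/quot_ind: x => t; elim/quot_ind: y => u; elim/quot_ind: z => v.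
change (qcirc (qmul (cl t) (cl u)) (cl v) = qmul (cl t) (qcirc (cl u) (cl v))).
rewrite qmulE !qcircE qmulE; qs (geq_comp1 S t u v).
Qed.
Lemma qcomp2 (x y z : QA) :
  qcirc x y * z - qcirc x (y * z) = qcirc y x * z - qcirc y (x * z).
Proof.
elim/quot_ind: x => t; elim/quot_ind: y => u; elim/quot_ind: z => v.
change (qadd (qmul (qcirc (cl t) (cl u)) (cl v)) (qscale (-1) (qcirc (cl t) (qmul (cl u) (cl v))))
  = qadd (qmul (qcirc (cl u) (cl t)) (cl v)) (qscale (-1) (qcirc (cl u) (qmul (cl t) (cl v))))).
rewrite !qcircE !qmulE !qcircE !qscaleE !qaddE; qs (geq_comp2 S t u v).
Qed.

Lemma qcirc_l (x y : QA) : qcirc x y = x * qcirc 1 y.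
Proof. by rewrite -qcomp1 mulr1. Qed.

Definition a0 : QA := qcirc 1 1.
Definition dd (y : QA) := qcirc 1 y - y * a0.
Lemma ddD (x y : QA) : dd (x + y) = dd x + dd y.
Proof. rewrite /dd qcircDr; ring. Qed.
Lemma ddZ c (y : QA) : dd (c *: y) = c *: dd y.
Proof. by rewrite /dd qcircZr qscaleZl scalerBr. Qed.
Lemma ddM (x y : QA) : dd (x * y) = dd x * y + x * dd y.
Proof.
have h := qcomp2 1 x y.
rewrite mul1r (qcirc_l x 1) (qcirc_l x y) in h.
have e : qcirc 1 (x * y) = qcirc 1 x * y - x * a0 * y + x * qcirc 1 y.
  rewrite /a0.
  have -> : qcirc 1 (x * y) = qcirc 1 x * y - (qcirc 1 x * y - qcirc 1 (x * y)) by ring.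
  rewrite h; ring.
rewrite /dd e; ring.
Qed.
Lemma dd1 : dd 1 = 0.
Proof. rewrite /dd /a0; ring. Qed.
Lemma circ_dd (x y : QA) : qcirc x y = x * (dd y + y * a0).
Proof. rewrite qcirc_l /dd; ring. Qed.

Definition B := seq (int * QA).
Definition pairF (l : B) (F : int -> QA -> QA) : QA := \sum_(p <- l) F p.1 p.2.
Definition addF (F : int -> QA -> QA) := forall m (x y : QA), F m (x + y) = F m x + F m y.
Definition E (l l' : B) := forall F, addF F -> pairF l F = pairF l' F.

Definition bsc c (l : B) : B := [seq (p.1, c *: p.2) | p <- l].
Definition bmul (l1 l2 : B) : B := [seq (p.1 + q.1, p.2 * q.2) | p <- l1, q <- l2].
Definition bstar (l1 l2 : B) : B := [seq (p.1 + q.1 + 1, p.2 * q.2) | p <- l1, q <- l2].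
Definition bD (l : B) : B := [seq (p.1 - 1, dd p.2 + (p.1 + 1)%:~R * (p.2 * a0)) | p <- l].

Lemma sum_mul l1 l2 (G : int * QA -> QA) :
  \sum_(r <- bmul l1 l2) G r = \sum_(p <- l1) \sum_(q <- l2) G (p.1 + q.1, p.2 * q.2).
Proof. by rewrite big_allpairs_dep. Qed.
Lemma sum_star l1 l2 (G : int * QA -> QA) :
  \sum_(r <- bstar l1 l2) G r = \sum_(p <- l1) \sum_(q <- l2) G (p.1 + q.1 + 1, p.2 * q.2).
Proof. by rewrite big_allpairs_dep. Qed.
Lemma sum_sc c l (G : int * QA -> QA) :
  \sum_(r <- bsc c l) G r = \sum_(p <- l) G (p.1, c *: p.2).
Proof. by rewrite big_map. Qed.
Lemma sum_D l (G : int * QA -> QA) :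
  \sum_(r <- bD l) G r = \sum_(p <- l) G (p.1 - 1, dd p.2 + (p.1 + 1)%:~R * (p.2 * a0)).
Proof. by rewrite big_map. Qed.

Lemma addF0 F m : addF F -> F m 0 = 0.
Proof. move=> hF; have h := hF m 0 0; rewrite addr0 in h; apply: (addrI (F m 0)); by rewrite -h addr0. Qed.

Lemma E_refl l : E l l. Proof. by []. Qed.
Lemma E_sym l l' : E l l' -> E l' l. Proof. by move=> h F hF; rewrite h. Qed.
Lemma E_trans l1 l2 l3 : E l1 l2 -> E l2 l3 -> E l1 l3.
Proof. by move=> h1 h2 F hF; rewrite h1 ?h2. Qed.
Lemma E_cat l1 l1' l2 l2' : E l1 l1' -> E l2 l2' -> E (l1 ++ l2) (l1' ++ l2').
Proof. by move=> h1 h2 F hF; rewrite /pairF !big_cat -!/(pairF _ F) h1 ?h2. Qed.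
Lemma E_sc c l l' : E l l' -> E (bsc c l) (bsc c l').
Proof.
move=> h F hF; rewrite /pairF !sum_sc /=.
by apply: (h (fun m y => F m (c *: y))) => m x y; rewrite scalerDr hF.
Qed.
Lemma E_D l l' : E l l' -> E (bD l) (bD l').
Proof.
move=> h F hF; rewrite /pairF !sum_D /=.
apply: (h (fun m y => F (m - 1) (dd y + (m + 1)%:~R * (y * a0)))) => m x y.
by rewrite -hF ddD; congr (F _ _); ring.
Qed.
Lemma E_mul l1 l1' l2 l2' : E l1 l1' -> E l2 l2' -> E (bmul l1 l2) (bmul l1' l2').
Proof.
move=> h1 h2 F hF; rewrite /pairF !sum_mul /=.
transitivity (\sum_(p <- l1') \sum_(q <- l2) F (p.1 + q.1) (p.2 * q.2)).
  apply: (h1 (fun m y => \sum_(q <- l2) F (m + q.1) (y * q.2))) => m x y.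
  by rewrite -big_split; apply: eq_bigr => q _; rewrite mulrDl hF.
rewrite exchange_big [RHS]exchange_big /=.
apply: (h2 (fun m z => \sum_(p <- l1') F (p.1 + m) (p.2 * z))) => m x y.
by rewrite -big_split; apply: eq_bigr => q _; rewrite mulrDr hF.
Qed.
Lemma E_star l1 l1' l2 l2' : E l1 l1' -> E l2 l2' -> E (bstar l1 l2) (bstar l1' l2').
Proof.
move=> h1 h2 F hF; rewrite /pairF !sum_star /=.
transitivity (\sum_(p <- l1') \sum_(q <- l2) F (p.1 + q.1 + 1) (p.2 * q.2)).
  apply: (h1 (fun m y => \sum_(q <- l2) F (m + q.1 + 1) (y * q.2))) => m x y.
  by rewrite -big_split; apply: eq_bigr => q _; rewrite mulrDl hF.
rewrite exchange_big [RHS]exchange_big /=.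
apply: (h2 (fun m z => \sum_(p <- l1') F (p.1 + m + 1) (p.2 * z))) => m x y.
by rewrite -big_split; apply: eq_bigr => q _; rewrite mulrDr hF.
Qed.
Fixpoint psi (t : cterm k X) : B :=
  match t with
  | cvar a => [:: ((0 : int), cl (gvar k a))]
  | cunit => [:: ((0 : int), 1)]
  | czero => [::]
  | cadd t u => psi t ++ psi u
  | cscale c t => bsc c (psi t)
  | cdot t u => bmul (psi t) (psi u)
  | cstar t u => bstar (psi t) (psi u)
  | cD t => bD (psi t)
  end.

Lemma psi_phi g : E (psi (phiGC g)) [:: ((0 : int), cl g)].
Proof.
elim: g => [a| | |t IHt u IHu|c t IHt|t IHt u IHu|t IHt u IHu] /=.
- exact: E_refl.
- exact: E_refl.
- move=> F hF; rewrite /pairF big_nil big_seq1 /=; exact: (esym (addF0 _ hF)).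
- apply: E_trans (E_cat IHt IHu) _ => F hF.
  rewrite /pairF /= !big_cons !big_nil !addr0 -qaddE; exact: (esym (hF _ _ _)).
- apply: E_trans (E_sc c IHt) _ => F hF.
  by rewrite /pairF /= !big_seq1 /= -qscaleE.
- apply: E_trans (E_mul IHt IHu) _ => F hF.
  by rewrite /pairF sum_mul !big_seq1 /= addr0 -qmulE.
- apply: E_trans (E_star IHt (E_D IHu)) _ => F hF.
  rewrite /pairF sum_star !big_seq1 /= -qcircE circ_dd.
  congr (F _ _); ring.
Qed.
Lemma F3 (F : int -> QA -> QA) (i0 i1 i2 i3 : int) (x0 x1 x2 x3 : QA) : addF F ->
  i1 = i0 -> i2 = i0 -> i3 = i0 -> x0 = x1 + x2 + x3 ->
  F i0 x0 = F i1 x1 + F i2 x2 + F i3 x3.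
Proof. by move=> hF -> -> -> ->; rewrite !hF. Qed.
Lemma F2 (F : int -> QA -> QA) (i0 i1 i2 : int) (x0 x1 x2 : QA) : addF F ->
  i1 = i0 -> i2 = i0 -> x0 = x1 + x2 -> F i0 x0 = F i1 x1 + F i2 x2.
Proof. by move=> hF -> -> ->; rewrite !hF. Qed.
Lemma F1 (F : int -> QA -> QA) (i0 i1 : int) (x0 x1 : QA) : i1 = i0 -> x0 = x1 -> F i0 x0 = F i1 x1.
Proof. by move=> -> ->. Qed.

Lemma bcat (l1 l2 : B) (G : int * QA -> QA) :
  \sum_(p <- l1 ++ l2) G p = \sum_(p <- l1) G p + \sum_(p <- l2) G p.
Proof. exact: big_cat. Qed.

Lemma bmul_seq1r l m y : bmul l [:: (m, y)] = [seq (p.1 + m, p.2 * y) | p <- l].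
Proof. by rewrite /bmul; elim: l => //= p l ->. Qed.

Lemma L_addA l1 l2 l3 : E ((l1 ++ l2) ++ l3) (l1 ++ (l2 ++ l3)).
Proof. rewrite catA; exact: E_refl. Qed.
Lemma L_addC l1 l2 : E (l1 ++ l2) (l2 ++ l1).
Proof. by move=> F hF; rewrite /pairF !bcat; apply: addrC. Qed.
Lemma L_add0 l : E (l ++ [::]) l.
Proof. rewrite cats0; exact: E_refl. Qed.
Lemma L_scale1 l : E (bsc 1 l) l.
Proof. by move=> F hF; rewrite /pairF sum_sc; apply: eq_bigr => -[m y] _; rewrite scale1r. Qed.
Lemma L_scale0 l : E (bsc 0 l) [::].
Proof. by move=> F hF; rewrite /pairF sum_sc big_nil big1 // => p _; rewrite scale0r addF0. Qed.
Lemma L_scaleA a b l : E (bsc (a * b) l) (bsc a (bsc b l)).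
Proof. by move=> F hF; rewrite /pairF !sum_sc; apply: eq_bigr => p _; rewrite scalerA. Qed.
Lemma L_scaleDl a b l : E (bsc (a + b) l) (bsc a l ++ bsc b l).
Proof.
move=> F hF; rewrite /pairF bcat !sum_sc -big_split; apply: eq_bigr => p _.
by rewrite scalerDl hF.
Qed.
Lemma L_scaleDr a l1 l2 : E (bsc a (l1 ++ l2)) (bsc a l1 ++ bsc a l2).
Proof. rewrite /bsc map_cat; exact: E_refl. Qed.
Lemma L_dotDl l1 l2 l3 : E (bmul (l1 ++ l2) l3) (bmul l1 l3 ++ bmul l2 l3).
Proof. by move=> F hF; rewrite /pairF bcat !sum_mul bcat. Qed.
Lemma L_dotDr l1 l2 l3 : E (bmul l1 (l2 ++ l3)) (bmul l1 l2 ++ bmul l1 l3).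
Proof.
move=> F hF; rewrite /pairF bcat !sum_mul -big_split; apply: eq_bigr => p _.
by rewrite bcat.
Qed.
Lemma L_starDl l1 l2 l3 : E (bstar (l1 ++ l2) l3) (bstar l1 l3 ++ bstar l2 l3).
Proof. by move=> F hF; rewrite /pairF bcat !sum_star bcat. Qed.
Lemma L_starDr l1 l2 l3 : E (bstar l1 (l2 ++ l3)) (bstar l1 l2 ++ bstar l1 l3).
Proof.
move=> F hF; rewrite /pairF bcat !sum_star -big_split; apply: eq_bigr => p _.
by rewrite bcat.
Qed.
Lemma L_dotZl c l1 l2 : E (bmul (bsc c l1) l2) (bsc c (bmul l1 l2)).
Proof.
move=> F hF; rewrite /pairF sum_mul sum_sc sum_sc sum_mul /=.
by apply: eq_bigr => p _; apply: eq_bigr => q _; rewrite qscaleZl.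
Qed.
Lemma L_dotZr c l1 l2 : E (bmul l1 (bsc c l2)) (bsc c (bmul l1 l2)).
Proof.
move=> F hF; rewrite /pairF sum_mul sum_sc sum_mul /=.
by apply: eq_bigr => p _; rewrite sum_sc; apply: eq_bigr => q _; rewrite qscaleZr.
Qed.
Lemma L_starZl c l1 l2 : E (bstar (bsc c l1) l2) (bsc c (bstar l1 l2)).
Proof.
move=> F hF; rewrite /pairF sum_star sum_sc sum_sc sum_star /=.
by apply: eq_bigr => p _; apply: eq_bigr => q _; rewrite qscaleZl.
Qed.
Lemma L_starZr c l1 l2 : E (bstar l1 (bsc c l2)) (bsc c (bstar l1 l2)).
Proof.
move=> F hF; rewrite /pairF sum_star sum_sc sum_star /=.
by apply: eq_bigr => p _; rewrite sum_sc; apply: eq_bigr => q _; rewrite qscaleZr.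
Qed.
Lemma L_DD l1 l2 : E (bD (l1 ++ l2)) (bD l1 ++ bD l2).
Proof. rewrite /bD map_cat; exact: E_refl. Qed.
Lemma L_DZ c l : E (bD (bsc c l)) (bsc c (bD l)).
Proof.
move=> F hF; rewrite /pairF sum_D sum_sc sum_sc sum_D /=.
apply: eq_bigr => p _ /=. congr (F _ _). by rewrite [RHS]scalerDr ddZ qscaleZl qscaleZr.
Qed.
Lemma L_dotC l1 l2 : E (bmul l1 l2) (bmul l2 l1).
Proof.
move=> F hF; rewrite /pairF !sum_mul exchange_big /=.
by apply: eq_bigr => p _; apply: eq_bigr => q _; rewrite addrC mulrC.
Qed.
Lemma L_starC l1 l2 : E (bstar l1 l2) (bstar l2 l1).
Proof.
move=> F hF; rewrite /pairF !sum_star exchange_big /=.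
by apply: eq_bigr => p _; apply: eq_bigr => q _; rewrite (addrC p.1) mulrC.
Qed.
Lemma L_dotA l1 l2 l3 : E (bmul (bmul l1 l2) l3) (bmul l1 (bmul l2 l3)).
Proof.
move=> F hF; rewrite /pairF !sum_mul /=.
apply: eq_bigr => p _; rewrite sum_mul; apply: eq_bigr => q _; apply: eq_bigr => r _ /=.
by rewrite addrA mulrA.
Qed.
Lemma L_starA l1 l2 l3 : E (bstar (bstar l1 l2) l3) (bstar l1 (bstar l2 l3)).
Proof.
move=> F hF; rewrite /pairF !sum_star /=.
apply: eq_bigr => p _; rewrite sum_star; apply: eq_bigr => q _; apply: eq_bigr => r _ /=.
apply: F1; [ring | by rewrite mulrA].
Qed.
Lemma L_comp l1 l2 l3 : E (bstar (bmul l1 l2) l3) (bmul l1 (bstar l2 l3)).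
Proof.
move=> F hF; rewrite /pairF sum_star sum_mul sum_mul /=.
apply: eq_bigr => p _; rewrite sum_star; apply: eq_bigr => q _; apply: eq_bigr => r _ /=.
apply: F1; [ring | by rewrite mulrA].
Qed.
Lemma L_dot1 l : E (bmul [:: ((0 : int), 1)] l) l.
Proof.
move=> F hF; rewrite /pairF sum_mul big_seq1 /=.
by apply: eq_bigr => q _; rewrite add0r mul1r.
Qed.
Lemma L_Dstar l1 l2 : E (bD (bstar l1 l2)) (bstar (bD l1) l2 ++ bstar l1 (bD l2)).
Proof.
move=> F hF; rewrite /pairF bcat sum_D !sum_star sum_D /=.
rewrite -big_split; apply: eq_bigr => p _; rewrite sum_D -big_split; apply: eq_bigr => q _ /=.
apply: F2 => //; try ring.
by rewrite ddM; ring.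
Qed.
Lemma L_Ddot l1 l2 :
  E (bD (bmul l1 l2))
    ((bmul (bD l1) l2 ++ bmul l1 (bD l2)) ++ bsc (-1) (bmul (bmul l1 l2) (bD [:: ((0 : int), 1)]))).
Proof.
have -> : bD [:: ((0 : int), 1)] = [:: (-1, a0)].
  rewrite /bD /= dd1; congr [:: (_, _)]; ring.
move=> F hF; rewrite /pairF !bcat sum_D !sum_mul sum_D sum_sc bmul_seq1r big_map sum_mul /=.
rewrite -!big_split; apply: eq_bigr => p _; rewrite sum_D -!big_split; apply: eq_bigr => q _ /=.
apply: F3 => //; try ring.
by rewrite scaleN1r ddM; ring.
Qed.
Lemma psi_cong x y : spc_cong (phi_img S) x y -> E (psi x) (psi y).
Proof.
elim=> /=.
- move=> t; exact: E_refl.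
- move=> t u _ IH; exact: E_sym IH.
- move=> t u v _ IH1 _ IH2; exact: E_trans IH1 IH2.
- move=> t t' u u' _ IH1 _ IH2; exact: E_cat IH1 IH2.
- move=> c t t' _ IH; exact: E_sc IH.
- move=> t t' u u' _ IH1 _ IH2; exact: E_mul IH1 IH2.
- move=> t t' u u' _ IH1 _ IH2; exact: E_star IH1 IH2.
- move=> t t' _ IH; exact: E_D IH.
- move=> *; exact: L_addA.
- move=> *; exact: L_addC.
- move=> *; exact: L_add0.
- move=> *; exact: L_scale1.
- move=> *; exact: L_scale0.
- move=> *; exact: L_scaleA.
- move=> *; exact: L_scaleDl.
- move=> *; exact: L_scaleDr.
- move=> *; exact: L_dotDl.
- move=> *; exact: L_dotDr.
- move=> *; exact: L_dotZl.
- move=> *; exact: L_dotZr.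
- move=> *; exact: L_starDl.
- move=> *; exact: L_starDr.
- move=> *; exact: L_starZl.
- move=> *; exact: L_starZr.
- move=> *; exact: L_DD.
- move=> *; exact: L_DZ.
- move=> *; exact: L_dotC.
- move=> *; exact: L_dotA.
- move=> *; exact: L_dot1.
- move=> *; exact: L_starC.
- move=> *; exact: L_starA.
- move=> *; exact: L_comp.
- move=> *; exact: L_Dstar.
- move=> *; exact: L_Ddot.
- move=> r [s Ss ->]; apply: E_trans (psi_phi s) _ => F hF.
  rewrite /pairF big_seq1 big_nil (cl_eq (geq_rel Ss)) /=; exact: addF0.
Qed.

Lemma main_aux t u : spc_cong (phi_img S) (phiGC t) (phiGC u) -> gdn_cong S t u.
Proof.
move=> h.
have H : E [:: ((0 : int), cl t)] [:: ((0 : int), cl u)].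
  exact: E_trans (E_sym (psi_phi t)) (E_trans (psi_cong h) (psi_phi u)).
have := H (fun _ y => y) (fun _ _ _ => erefl).
by rewrite /pairF !big_seq1 /= => /cl_inj.
Qed.
End Q.

Theorem mainTheorem2 (k : fieldType) (X : Type) (S : gterm k X -> Prop)
  (t u : gterm k X) :
  spc_cong (phi_img S) (phiGC t) (phiGC u) -> gdn_cong S t u.
Proof. exact: main_aux. Qed.
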